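(* Let $\mu$ and $\nu$ be positive Borel measures on $\mathbb{R}$ with finite moments of all orders and infinite support, and suppose there is a real polynomial $r$ of degree $1$ such that $\int_\mathbb{R} f\,d\mu=\int_\mathbb{R} f\,r\,d\nu$ for all polynomials $f$. Let $(P_n)_{n\ge0}$, resp. $(p_n)_{n\ge0}$, be orthogonal polynomials (with $\deg P_n=\deg p_n=n$) for $\mu$, resp. $\nu$, with $\int P_nP_m\,d\mu=H_n\delta_{n,m}$ and $\int p_np_m\,d\nu=h_n\delta_{n,m}$, and let $\Phi_n=P_n/\sqrt{H_n}$, $\phi_n=p_n/\sqrt{h_n}$. Then for all $n\ge0$ \[ \phi_n=A_n\Phi_n+B_n\Phi_{n-1},\qquad A_n=\frac{\mathrm{lc}(p_n)}{\mathrm{lc}(P_n)}\sqrt{\frac{H_n}{h_n}},\quad B_n=\mathrm{lc}(r)\sqrt{\frac{h_n}{H_{n-1}}}\frac{\mathrm{lc}(P_{n-1})}{\mathrm{lc}(p_n)}\ (n\ge1),\ B_0=0. \] Moreover, let $L$ be a linear operator on the space $\mathcal P$ of polynomials with $LP_n=\Lambda_nP_n$, $\Lambda_n\in\mathbb{R}$ (and set $\Lambda_{-1}=0$). Then the operator $T=rL$ on $\mathcal P$ satisfies, for all $n\ge0$, \[ T\phi_n=a_n\phi_{n+1}+b_n\phi_n+a_{n-1}\phi_{n-1}, \] with $a_{-1}=0$ and \[ a_n=\Lambda_nA_nB_{n+1}=\Lambda_n\,\mathrm{lc}(r)\frac{\mathrm{lc}(p_n)}{\mathrm{lc}(p_{n+1})}\sqrt{\frac{h_{n+1}}{h_n}},\qquad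 b_n=\Lambda_nA_n^2+\Lambda_{n-1}B_n^2 . \] In particular (taking $L$ the identity) multiplication by $r$ satisfies $r\phi_n=A_nB_{n+1}\phi_{n+1}+(A_n^2+B_n^2)\phi_n+A_{n-1}B_n\phi_{n-1}$.
   Context: $\mathrm{lc}(p)$ denotes the leading coefficient of a polynomial $p$. *)

(* Defs.v *)
From HB Require Import structures.
From mathcomp Require Import all_boot all_order all_algebra.
Set Implicit Arguments. Unset Strict Implicit. Unset Printing Implicit Defensive.
Import Order.TTheory GRing.Theory Num.Theory.
Local Open Scope ring_scope.

(* A "measure" is represented through its moment functional f |-> \int f dmu
   on polynomials (the only way the measure enters the statement). *)

Definition lin_functional (R : rcfType) (mu : {poly R} -> R) : Prop :=
  forall (a : R) (f g : {poly R}), mu (a *: f + g) = a * mu f + mu g.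

Definition lin_operator (R : rcfType) (L : {poly R} -> {poly R}) : Prop :=
  forall (a : R) (f g : {poly R}), L (a *: f + g) = a *: L f + L g.

(* moment functional of a positive Borel measure with infinite support:
   \int f^2 dmu > 0 for every nonzero polynomial f (Hamburger). *)
Definition pos_def_functional (R : rcfType) (mu : {poly R} -> R) : Prop :=
  lin_functional mu /\ forall f : {poly R}, f != 0 -> 0 < mu (f * f).

Definition orth_seq (R : rcfType) (mu : {poly R} -> R) (P : nat -> {poly R}) : Prop :=
  (forall n, size (P n) = n.+1) /\
  (forall n m, n != m -> mu (P n * P m) = 0).

Definition sqnorm (R : rcfType) (mu : {poly R} -> R) (P : nat -> {poly R}) (n : nat) : R :=
  mu (P n * P n).

Definition onp (R : rcfType) (mu : {poly R} -> R) (P : nat -> {poly R}) (n : nat) : {poly R} :=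
  (Num.sqrt (sqnorm mu P n))^-1 *: P n.

Definition prevp (R : rcfType) (F : nat -> {poly R}) (n : nat) : {poly R} :=
  if n is k.+1 then F k else 0.
Definition prevr (R : rcfType) (F : nat -> R) (n : nat) : R :=
  if n is k.+1 then F k else 0.

Definition Acoef (R : rcfType) (mu nu : {poly R} -> R) (P p : nat -> {poly R}) (n : nat) : R :=
  lead_coef (p n) / lead_coef (P n) * Num.sqrt (sqnorm mu P n / sqnorm nu p n).

Definition Bcoef (R : rcfType) (mu nu : {poly R} -> R) (r : {poly R})
  (P p : nat -> {poly R}) (n : nat) : R :=
  if n is k.+1 then
    lead_coef r * Num.sqrt (sqnorm nu p n / sqnorm mu P k) * (lead_coef (P k) / lead_coef (p n))
  else 0.

Definition acoef (R : rcfType) (mu nu : {poly R} -> R) (r : {poly R})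
  (P p : nat -> {poly R}) (Lam : nat -> R) (n : nat) : R :=
  Lam n * Acoef mu nu P p n * Bcoef mu nu r P p n.+1.

Definition bcoef (R : rcfType) (mu nu : {poly R} -> R) (r : {poly R})
  (P p : nat -> {poly R}) (Lam : nat -> R) (n : nat) : R :=
  Lam n * (Acoef mu nu P p n) ^+ 2 + prevr Lam n * (Bcoef mu nu r P p n) ^+ 2.

(* Main.v *)
Require Import Defs.
From HB Require Import structures.
From mathcomp Require Import all_boot all_order all_algebra.
From mathcomp Require Import ring lra.
Import Order.TTheory GRing.Theory Num.Theory.
Set Implicit Arguments. Unset Strict Implicit.
Local Open Scope ring_scope.

Section Orth.
Variables (R : rcfType) (mu : {poly R} -> R) (P : nat -> {poly R}).
Hypotheses (hmu : pos_def_functional mu) (hP : orth_seq mu P).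

Lemma mu0 : mu 0 = 0.
Proof.
have h := hmu.1 1 0 0; rewrite scale1r addr0 mul1r in h.
lra.
Qed.
Lemma muD f g : mu (f + g) = mu f + mu g.
Proof. by rewrite -{1}[f]scale1r hmu.1 mul1r. Qed.
Lemma muZ a f : mu (a *: f) = a * mu f.
Proof. by rewrite -[a *: f]addr0 hmu.1 mu0 addr0. Qed.
Lemma muN f : mu (- f) = - mu f.
Proof. by rewrite -scaleN1r muZ mulN1r. Qed.
Lemma muB f g : mu (f - g) = mu f - mu g.
Proof. by rewrite muD muN. Qed.
Lemma mu_sum (I : Type) (s : seq I) (F : I -> {poly R}) :
  mu (\sum_(i <- s) F i) = \sum_(i <- s) mu (F i).
Proof.
elim: s => [|x s IH]; first by rewrite !big_nil mu0.
by rewrite !big_cons muD IH.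
Qed.

Lemma sizeP n : size (P n) = n.+1. Proof. exact: hP.1. Qed.
Lemma PnZ n : P n != 0.
Proof. by rewrite -size_poly_eq0 sizeP. Qed.
Lemma lcPZ n : lead_coef (P n) != 0.
Proof. by rewrite lead_coef_eq0 PnZ. Qed.
Lemma coefPn n : (P n)`_n = lead_coef (P n).
Proof. by rewrite lead_coefE sizeP. Qed.
Lemma Hpos n : 0 < mu (P n * P n).
Proof. exact: hmu.2 _ (PnZ n). Qed.

Lemma size_drop (f : {poly R}) n : (size f <= n.+1)%N -> f`_n = 0 -> (size f <= n)%N.
Proof.
move=> hs hn; apply/leq_sizeP => j; rewrite leq_eqVlt => /orP[/eqP<-//|hj].
by rewrite nth_default // (leq_trans hs hj).
Qed.

Lemma expand N (q : {poly R}) : (size q <= N)%N -> exists c : nat -> R, q = \sum_(k < N) c k *: P k.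
Proof.
elim: N q => [|N IH] q hq.
  by exists (fun _ => 0); rewrite big_ord0; apply/eqP; rewrite -size_poly_eq0 -leqn0.
set d := q`_N / lead_coef (P N).
have hs : (size (q - d *: P N)%R <= N)%N.
  apply: size_drop.
    apply/leq_sizeP => j hj; rewrite coefB coefZ !nth_default ?sizeP ?mulr0 ?subr0 //.
    exact: leq_trans hq hj.
  by rewrite coefB coefZ coefPn /d mulfVK ?subrr // lcPZ.
have [c hc] := IH _ hs.
exists (fun k => if k == N then d else c k).
rewrite big_ord_recr /= eqxx. rewrite -{1}(subrK (d *: P N) q) hc; congr (_ + _).
by apply: eq_bigr => i _; rewrite ltn_eqF.
Qed.

Lemma mu_orth_lower n (f : {poly R}) : (size f <= n)%N -> mu (P n * f) = 0.
Proof.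
move=> /expand [c ->]; rewrite mulr_sumr mu_sum big1 // => i _.
rewrite -scalerAr muZ hP.2 ?mulr0 //.
by rewrite neq_ltn ltn_ord orbT.
Qed.

Lemma mu_top n (f : {poly R}) : (size f <= n.+1)%N ->
  mu (P n * f) = f`_n / lead_coef (P n) * mu (P n * P n).
Proof.
move=> hf; set d := f`_n / lead_coef (P n).
have hs : (size (f - d *: P n)%R <= n)%N.
  apply: size_drop.
    apply/leq_sizeP => j hj; rewrite coefB coefZ !nth_default ?sizeP ?mulr0 ?subr0 //.
    exact: leq_trans hf hj.
  by rewrite coefB coefZ coefPn /d mulfVK ?subrr // lcPZ.
rewrite -{1}(subrK (d *: P n) f) mulrDr muD mu_orth_lower // add0r.
by rewrite -scalerAr muZ.
Qed.

Lemma vanish n (g : {poly R}) : (size g <= n)%N -> (forall k, (k < n)%N -> mu (g * P k) = 0) -> g = 0.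
Proof.
move=> hs ho; have [c hc] := @expand n g hs.
have h0 : mu (g * g) = 0.
  rewrite {2}hc mulr_sumr mu_sum big1 // => i _.
  by rewrite -scalerAr muZ ho ?mulr0.
apply/eqP; apply/negPn/negP => /(hmu.2 g).
by rewrite h0 ltxx.
Qed.
End Orth.
Section Two.
Variables (R : rcfType) (mu nu : {poly R} -> R) (r : {poly R}) (P p : nat -> {poly R}).
Hypotheses (hmu : pos_def_functional mu) (hnu : pos_def_functional nu)
  (hr : size r = 2%N) (hmr : forall f, mu f = nu (f * r))
  (hP : orth_seq mu P) (hp : orth_seq nu p).

Lemma rZ : r != 0. Proof. by rewrite -size_poly_eq0 hr. Qed.

Lemma sizePr k : size (P k * r) = k.+2.
Proof. by rewrite size_mul ?rZ ?(PnZ hP) // (sizeP hP) hr addn2. Qed.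

Lemma coefPr k : (P k * r)`_k.+1 = lead_coef (P k) * lead_coef r.
Proof. by rewrite -lead_coefM lead_coefE sizePr. Qed.

Lemma sizerP k : size (r * P k) = k.+2.
Proof. by rewrite mulrC sizePr. Qed.

Lemma coefrP k : (r * P k)`_k.+1 = lead_coef r * lead_coef (P k).
Proof. by rewrite mulrC coefPr mulrC. Qed.

Lemma K1 n : p n = (lead_coef (p n) / lead_coef (P n)) *: P n +
  (if n is m.+1 then lead_coef r * lead_coef (P m) * sqnorm nu p n / (lead_coef (p n) * sqnorm mu P m) else 0) *: prevp P n.
Proof.
have hsz : (size (prevp P n) <= n)%N by case: n => [|m]; rewrite /= ?size_poly0 ?(sizeP hP).
apply/eqP; rewrite -subr_eq0; apply/eqP.
apply: (@vanish _ mu P hmu hP n).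
  apply: size_drop.
    apply/leq_sizeP => j hj; rewrite coefB coefD !coefZ.
    rewrite (nth_default _ (leq_trans hsz (ltnW hj))) !nth_default ?(sizeP hP) ?(sizeP hp) //.
    by rewrite !mulr0 !addr0 subr0.
  rewrite coefB coefD !coefZ (nth_default _ hsz) (coefPn hP) (coefPn hp) mulr0 addr0.
  by rewrite mulfVK ?subrr // (lcPZ hP).
move=> k hk; rewrite mulrBl mulrDl (muB hmu) (muD hmu) -!scalerAl !(muZ hmu).
case: n hk hsz => [//|m] hk _ /=.
rewrite hmr -(mulrA (p m.+1)).
move: hk; rewrite ltnS leq_eqVlt => /orP[/eqP ->|hk].
  rewrite (mu_top hnu hp) ?sizePr // coefPr (hP.2 m.+1 m) ?neq_ltn ?ltnSn ?orbT //.
  rewrite /sqnorm.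
  have h1 := lcPZ hp m.+1; have h2 := Hpos hmu hP m; have h3 := lcPZ hP m.+1.
  by field; rewrite ?h1 ?h3 ?lt0r_neq0.
rewrite (mu_orth_lower hnu hp) ?sizePr // (hP.2 m.+1 k) ?(hP.2 m k) ?neq_ltn ?hk ?orbT //.
  by rewrite !mulr0 addr0 subrr.
by rewrite ltnS (ltnW hk) orbT.
Qed.

Lemma K2 n : r * P n = (lead_coef r * lead_coef (P n) / lead_coef (p n.+1)) *: p n.+1 +
  (lead_coef (p n) * sqnorm mu P n / (lead_coef (P n) * sqnorm nu p n)) *: p n.
Proof.
apply/eqP; rewrite -subr_eq0; apply/eqP.
apply: (@vanish _ nu p hnu hp n.+1).
  apply: size_drop.
    apply/leq_sizeP => j hj; rewrite coefB coefD !coefZ.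
    rewrite !nth_default ?(sizeP hp) ?sizerP //; last exact: ltnW.
    by rewrite !mulr0 !addr0 subr0.
  rewrite coefB coefD !coefZ coefrP (coefPn hp) (nth_default _ _); last by rewrite (sizeP hp).
  by rewrite mulr0 addr0 mulfVK ?subrr // (lcPZ hp).
move=> k hk; rewrite mulrBl mulrDl (muB hnu) (muD hnu) -!scalerAl !(muZ hnu).
have -> : nu (r * P n * p k) = mu (P n * p k) by rewrite hmr; congr nu; ring.
move: hk; rewrite ltnS leq_eqVlt => /orP[/eqP ->|hk].
  rewrite (mu_top hmu hP) ?(sizeP hp) // (coefPn hp) (hp.2 n.+1 n) ?neq_ltn ?ltnSn ?orbT //.
  rewrite /sqnorm.
  have h1 := lcPZ hP n; have h2 := Hpos hnu hp n; have h3 := lcPZ hp n.+1.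
  by field; rewrite ?h1 ?h3 ?lt0r_neq0.
rewrite (mu_orth_lower hmu hP) ?(sizeP hp) // (hp.2 n.+1 k) ?(hp.2 n k) ?neq_ltn ?hk ?orbT //.
  by rewrite !mulr0 addr0 subrr.
by rewrite ltnS (ltnW hk) orbT.
Qed.
End Two.
Section Sq.
Variable R : rcfType.
Lemma sq_sub (x : R) : 0 < x -> exists2 u, 0 < u & x = u ^+ 2.
Proof. by move=> hx; exists (Num.sqrt x); rewrite ?sqrtr_gt0 ?sqr_sqrtr // ltW. Qed.
Lemma sqrt_sq (u : R) : 0 < u -> Num.sqrt (u ^+ 2) = u.
Proof. by move=> hu; rewrite sqrtr_sqr gtr0_norm. Qed.
Lemma sqrt_divsq (u v : R) : 0 < u -> 0 < v -> Num.sqrt (u ^+ 2 / v ^+ 2) = u / v.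
Proof. by move=> hu hv; rewrite -expr_div_n sqrt_sq // divr_gt0. Qed.

Lemma hA (lp lP H h : R) : lP != 0 -> 0 < H -> 0 < h ->
  (Num.sqrt h)^-1 * (lp / lP) = lp / lP * Num.sqrt (H / h) * (Num.sqrt H)^-1.
Proof.
move=> h1 /sq_sub[u u0 ->] /sq_sub[v v0 ->]; rewrite !sqrt_sq // sqrt_divsq //.
by field; rewrite ?h1 ?lt0r_neq0.
Qed.
Lemma hB (lr lPm lp h Hm : R) : lp != 0 -> 0 < h -> 0 < Hm ->
  (Num.sqrt h)^-1 * (lr * lPm * h / (lp * Hm)) =
  lr * Num.sqrt (h / Hm) * (lPm / lp) * (Num.sqrt Hm)^-1.
Proof.
move=> h1 /sq_sub[u u0 ->] /sq_sub[v v0 ->]; rewrite !sqrt_sq // sqrt_divsq //.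
by field; rewrite ?h1 ?lt0r_neq0.
Qed.
Lemma hC (lr lP lp' H h' : R) : lp' != 0 -> 0 < H -> 0 < h' ->
  (Num.sqrt H)^-1 * (lr * lP / lp') = lr * Num.sqrt (h' / H) * (lP / lp') * (Num.sqrt h')^-1.
Proof.
move=> h1 /sq_sub[u u0 ->] /sq_sub[v v0 ->]; rewrite !sqrt_sq // sqrt_divsq //.
by field; rewrite ?h1 ?lt0r_neq0.
Qed.
Lemma hD (lp lP H h : R) : lP != 0 -> 0 < H -> 0 < h ->
  (Num.sqrt H)^-1 * (lp * H / (lP * h)) = lp / lP * Num.sqrt (H / h) * (Num.sqrt h)^-1.
Proof.
move=> h1 /sq_sub[u u0 ->] /sq_sub[v v0 ->]; rewrite !sqrt_sq // sqrt_divsq //.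
by field; rewrite ?h1 ?lt0r_neq0.
Qed.
Lemma hE (Lam lr lp lP lp' H h h' : R) : lP != 0 -> lp' != 0 -> 0 < H -> 0 < h -> 0 < h' ->
  Lam * (lp / lP * Num.sqrt (H / h)) * (lr * Num.sqrt (h' / H) * (lP / lp')) =
  Lam * lr * (lp / lp') * Num.sqrt (h' / h).
Proof.
move=> h1 h2 /sq_sub[u u0 ->] /sq_sub[v v0 ->] /sq_sub[w w0 ->]; rewrite !sqrt_divsq //.
by field; rewrite ?h1 ?h2 ?lt0r_neq0.
Qed.
End Sq.

Theorem mainTheorem1 (R : rcfType) (mu nu : {poly R} -> R) (r : {poly R})
  (P p : nat -> {poly R}) (L : {poly R} -> {poly R}) (Lam : nat -> R) :
  pos_def_functional mu -> pos_def_functional nu ->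
  size r = 2%N ->
  (forall f : {poly R}, mu f = nu (f * r)) ->
  orth_seq mu P -> orth_seq nu p ->
  lin_operator L ->
  (forall n, L (P n) = Lam n *: P n) ->
  let Phi := onp mu P in
  let phi := onp nu p in
  let A := Acoef mu nu P p in
  let B := Bcoef mu nu r P p in
  let a := acoef mu nu r P p Lam in
  let b := bcoef mu nu r P p Lam in
  (forall n, phi n = A n *: Phi n + B n *: prevp Phi n) /\
  (forall n, a n = Lam n * lead_coef r * (lead_coef (p n) / lead_coef (p n.+1))
                   * Num.sqrt (sqnorm nu p n.+1 / sqnorm nu p n)) /\
  (forall n, r * L (phi n) = a n *: phi n.+1 + b n *: phi n + prevr a n *: prevp phi n) /\
  (forall n, r * phi n = (A n * B n.+1) *: phi n.+1 + (A n ^+ 2 + B n ^+ 2) *: phi n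
                         + prevr (fun k => A k * B k.+1) n *: prevp phi n).
Proof.
move=> hmu hnu hr hmr hP hp hL hLP Phi phi A B a b.
have C1 : forall n, phi n = A n *: Phi n + B n *: prevp Phi n.
  move=> n; rewrite /phi /Phi /onp {1}(K1 hmu hnu hr hmr hP hp n) scalerDr !scalerA.
  case: n => [|m] /=.
    rewrite !scaler0 !addr0; congr (_ *: _).
    by apply: hA; rewrite ?(lcPZ hP) ?(Hpos hmu hP) ?(Hpos hnu hp).
  rewrite /onp ?scalerA; congr (_ *: _ + _ *: _).
    by apply: hA; rewrite ?(lcPZ hP) ?(Hpos hmu hP) ?(Hpos hnu hp).
  by apply: hB; rewrite ?(lcPZ hp) ?(Hpos hmu hP) ?(Hpos hnu hp).
have CrPhi : forall n, r * Phi n = A n *: phi n + B n.+1 *: phi n.+1.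
  move=> n; rewrite /Phi /onp -scalerAr (K2 hmu hnu hr hmr hP hp n) scalerDr !scalerA.
  rewrite /phi /onp ?scalerA addrC; congr (_ *: _ + _ *: _).
    by apply: hD; rewrite ?(lcPZ hP) ?(Hpos hmu hP) ?(Hpos hnu hp).
  by apply: hC; rewrite ?(lcPZ hp) ?(Hpos hmu hP) ?(Hpos hnu hp).
have B0 : B 0 = 0 by [].
have L0 : L 0 = 0.
  have h := hL 1 0 0; rewrite !scale1r addr0 in h.
  by have := congr1 (fun x => x - L 0) h; rewrite /= subrr addrK => <-.
have LZ : forall c f, L (c *: f) = c *: L f.
  by move=> c f; rewrite -[c *: f]addr0 hL L0 addr0.
have LD : forall f g, L (f + g) = L f + L g.
  by move=> f g; rewrite -{1}[f]scale1r hL scale1r.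
have LPhi : forall n, L (Phi n) = Lam n *: Phi n.
  by move=> n; rewrite /Phi /onp LZ hLP !scalerA mulrC.
clearbody Phi phi.
have ha : forall n, a n = Lam n * A n * B n.+1 by [].
have hb : forall n, b n = Lam n * A n ^+ 2 + prevr Lam n * B n ^+ 2 by [].
split; first exact: C1.
split.
  move=> n; rewrite /a /acoef /A /B /Acoef /Bcoef /=.
  by apply: hE; rewrite ?(lcPZ hP) ?(lcPZ hp) ?(Hpos hmu hP) ?(Hpos hnu hp).
clearbody a b A B.
split.
  move=> n; rewrite {1}C1 LD LZ LZ LPhi mulrDr -!scalerAr CrPhi.
  case: n => [|m] /=.
    rewrite L0 !scaler0 mulr0 !scaler0 !addr0 ha hb B0 /=.
    rewrite -!mul_polyC !(rmorphD, rmorphM, rmorphXn) /=. ring.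
  rewrite LPhi -scalerAr CrPhi !ha hb /=.
  rewrite -!mul_polyC !(rmorphD, rmorphM, rmorphXn) /=. ring.
move=> n; rewrite {1}C1 mulrDr -!scalerAr CrPhi.
case: n => [|m] /=.
  rewrite mulr0 !scaler0 !addr0 B0.
  rewrite -!mul_polyC !(rmorphD, rmorphM, rmorphXn, rmorph0) /=. ring.
rewrite CrPhi.
rewrite -!mul_polyC !(rmorphD, rmorphM, rmorphXn) /=. ring.
Qed.
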